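(* Let $E$ be a reflexive real Banach space with norm $\|\cdot\|$, let $X$ be a real Banach space with $E\hookrightarrow X$ compactly, and let $I\in C^1(E,\mathbb{R})$ be of the form $I=J-N$, where $N\in C^1(E,\mathbb{R})$ and $J$ is $2$-homogeneous, i.e. $J(\tau u)=\tau^2J(u)$ for all $\tau\in\mathbb{R}$, $u\in E$. Assume: (H1) there exist $t\in(0,1)$ and a function $\psi:E\to[0,\infty)$, homogeneous of degree one, with $\|u\|_X\le\psi(u)^{1-t}\|u\|^t$ for all $u\in E$; (H2) there exist $a,c,\mu>0$ with $|\langle N'(u),u\rangle-2N(u)|\ge a\psi(u)^\mu-c$ for all $u\in E$; (H3) there is $k>0$ with $J(u)\ge k\|u\|^2$ for all $u\in E$; (H4) there exist $b,d>0$ and $q>2$ with $|N(u)|\le b\|u\|_X^q+d$ for all $u\in E$; and suppose $qt<2$. Then $I$ satisfies condition $(\hat C)_c$ for every $c\in\mathbb{R}$.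
   Context: $I$ satisfies $(\hat C)_c$ if every sequence $(u_n)\subset E$ with $I(u_n)\to c$ and $(1+\|u_n\|)\,\|I'(u_n)\|_{E^*}\to0$ has a bounded subsequence. *)

(* Defs.v *)
From HB Require Import structures.
From mathcomp Require Import all_boot all_order all_algebra.
From mathcomp Require Import all_classical all_reals all_analysis.
Set Implicit Arguments. Unset Strict Implicit. Unset Printing Implicit Defensive.
Import Order.TTheory GRing.Theory Num.Theory.
Import numFieldNormedType.Exports.
Local Open Scope classical_set_scope.
Local Open Scope ring_scope.

Section Defs.
Variable R : realType.

Definition is_linear_functional (E : normedModType R) (f : E -> R) : Prop :=
  forall (a : R) (x y : E), f (a *: x + y) = a * f x + f y.

Definition in_dual (E : normedModType R) (f : E -> R) : Prop :=
  is_linear_functional f /\ continuous f.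

Definition dual_norm (E : normedModType R) (f : E -> R) : R :=
  sup [set `|f x| | x in [set x : E | `|x| <= 1]].

Definition in_bidual (E : normedModType R) (Phi : (E -> R) -> R) : Prop :=
  (forall (a : R) (f g : E -> R), in_dual f -> in_dual g ->
      Phi (fun x => a * f x + g x) = a * Phi f + Phi g) /\
  (exists C : R, forall f : E -> R, in_dual f -> `|Phi f| <= C * dual_norm f).

(* reflexivity: the canonical embedding E -> E^{**} is surjective *)
Definition reflexive_space (E : normedModType R) : Prop :=
  forall Phi : (E -> R) -> R, in_bidual Phi ->
    exists x : E, forall f : E -> R, in_dual f -> Phi f = f x.

Definition compact_embedding (E X : normedModType R) (i : E -> X) : Prop :=
  (forall (a : R) (x y : E), i (a *: x + y) = a *: i x + i y) /\
  continuous i /\ injective i /\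
  (forall B : set E, (exists M : R, forall x, B x -> `|x| <= M) ->
     compact (closure (i @` B))).

(* I in C^1(E, R): Frechet differentiable everywhere, and u |-> I'(u)
   continuous for the operator norm of E^* *)
Definition C1 (E : normedModType R) (I : E -> R) : Prop :=
  (forall u : E, differentiable I u) /\
  (forall u : E, forall eps : R, 0 < eps -> exists delta : R, 0 < delta /\
     forall v : E, `|v - u| < delta ->
       forall h : E, `|'d I v h - 'd I u h| <= eps * `|h|).

Definition Chat (E : normedModType R) (I : E -> R) (c : R) : Prop :=
  forall u : nat -> E,
    (fun n => I (u n)) @ \oo --> c ->
    (fun n => (1 + `|u n|) * dual_norm ('d I (u n))) @ \oo --> (0 : R) ->
    exists (phi : nat -> nat) (M : R),
      (forall m n, (m < n)%N -> (phi m < phi n)%N) /\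
      (forall n, `|u (phi n)| <= M).

End Defs.

(* Main.v *)
Require Import Defs.
From HB Require Import structures.
From mathcomp Require Import all_boot all_order all_algebra.
From mathcomp Require Import all_classical all_reals all_analysis.
From mathcomp Require Import ring lra.
Import Order.TTheory GRing.Theory Num.Theory.
Import numFieldNormedType.Exports.
Local Open Scope classical_set_scope.
Local Open Scope ring_scope.
Lemma hom_diff (R: realType) (E: normedModType R) (J : E -> R) u :
  (forall tau v, J (tau *: v) = tau^+2 * J v) -> differentiable J u -> 'd J u u = 2 * J u.
Proof.
move=> hJ dJ. rewrite -deriveE //. apply: cvg_lim => //.
have H2 : (fun h : R => (h + 2) * J u) @ 0^' --> 2 * J u.
  apply: cvg_within_filter.
  have -> : 2 * J u = (0 + 2) * J u by rewrite add0r.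
  apply: cvgMl. apply: cvgD. exact: cvg_id. exact: cvg_cst.
apply: cvg_trans H2.
  apply: near_eq_cvg. near=> h.
  have h0 : h != 0 by near: h; exact: nbhs_dnbhs_neq.
  have -> : (J \o shift u) (h *: u) = (h+1)^+2 * J u.
    by rewrite -hJ /= scalerDl scale1r.
  rewrite /GRing.scale /=.
  idtac.
  rewrite /GRing.scale /=. field.
  by [].
Unshelve. all: by end_near. Qed.
Lemma dual_bound (R: realType) (E: normedModType R) (f : {linear E -> R}) :
  continuous f -> forall x, `|f x| <= dual_norm f * `|x|.
Proof.
move=> cf x.
have /linear_boundedP hb := (proj2 (linear_bounded_continuous f) cf).
near +oo_R => r.
have hr : forall x, `|f x| <= r * `|x| by near: r.
have r0 : 0 < r by near: r; exact: nbhs_pinfty_gt.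
have ub : has_ubound [set `|f x| | x in [set x : E | `|x| <= 1]].
  exists r => _ [y /= y1 <-]. apply: (le_trans (hr y)).
  by rewrite -[leRHS]mulr1 ler_wpM2l // ltW.
have [->|x0] := eqVneq x 0.
  by rewrite linear0 normr0 normr0 mulr0.
have nx : 0 < `|x| by rewrite normr_gt0.
have inS : [set `|f x| | x in [set x : E | `|x| <= 1]] `|f (`|x|^-1 *: x)|.
  exists (`|x|^-1 *: x) => //=.
  rewrite normrZ ger0_norm; last by rewrite invr_ge0 ltW.
  by rewrite mulVf // gt_eqF.
have := ub_le_sup ub inS.
rewrite linearZ normrM ger0_norm; last by rewrite invr_ge0 ltW.
rewrite /dual_norm.
by rewrite ler_pdivrMl // mulrC.
Unshelve. all: by end_near. Qed.
Lemma growth (R : realType) (r k A B s : R) : 0 <= r -> 0 < k -> 0 <= A -> 0 <= B ->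
  0 <= s -> s < 2 -> k * r^+2 <= A + B * r `^ s -> r <= 1 + ((A+B)/k) `^ (2-s)^-1.
Proof.
move=> r0 k0 A0 B0 s0 s2 h.
have [r1|r1] := leP r 1.
  by apply: (le_trans r1); rewrite lerDl powR_ge0.
have rge1 : 1 <= r by rewrite ltW.
have rs1 : 1 <= r `^ s by rewrite -(powRr0 r) ler_powR.
have rs0 : 0 < r `^ s by apply: (lt_le_trans ltr01).
have e2 : r ^+ 2 = r `^ (2 - s) * r `^ s.
  rewrite -powRD; last by rewrite (gt_eqF (lt_trans ltr01 r1)) implybT.
  by rewrite subrK -powR_mulrn.
have h2 : k * r `^ (2 - s) <= A + B.
  rewrite -(ler_pM2r rs0) -mulrA -e2 mulrDl (le_trans h) // lerD2r.
  by rewrite -[leLHS]mulr1 ler_wpM2l.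
have h3 : r `^ (2 - s) <= (A + B) / k by rewrite ler_pdivlMr // mulrC.
have s2' : 0 < 2 - s by rewrite subr_gt0.
have -> : r = (r `^ (2 - s)) `^ (2 - s)^-1.
  by rewrite -powRrM mulfV ?gt_eqF // powRr1.
apply: le_trans (_ : ((A + B) / k) `^ (2 - s)^-1 <= _); last by rewrite lerDr.
apply: ge0_ler_powR => //; first by rewrite invr_ge0 ltW.
  by rewrite nnegrE powR_ge0.
by rewrite nnegrE (le_trans _ h3) // powR_ge0.
Qed.

Lemma root_bound (R : realType) (x mu P : R) : 0 <= x -> 0 < mu -> x `^ mu <= P -> x <= P `^ mu^-1.
Proof.
move=> x0 mu0 h.
have -> : x = (x `^ mu) `^ mu^-1 by rewrite -powRrM mulfV ?gt_eqF // powRr1.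
apply: ge0_ler_powR => //; first by rewrite invr_ge0 ltW.
  by rewrite nnegrE powR_ge0.
by rewrite nnegrE (le_trans _ h) // powR_ge0.
Qed.

Theorem theorem2p2 (R : realType) (E X : completeNormedModType R)
  (i : E -> X) (J N : E -> R)
  (t : R) (psi : E -> R) (a c0 mu k b d q : R) :
  reflexive_space E ->
  compact_embedding i ->
  C1 (fun u => J u - N u) ->
  C1 N ->
  (forall (tau : R) (u : E), J (tau *: u) = tau ^+ 2 * J u) ->
  (* (H1) *)
  0 < t < 1 ->
  (forall u, 0 <= psi u) ->
  (forall (tau : R) (u : E), 0 < tau -> psi (tau *: u) = tau * psi u) ->
  (forall u, `|i u| <= psi u `^ (1 - t) * `|u| `^ t) ->
  (* (H2) *)
  0 < a -> 0 < c0 -> 0 < mu ->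
  (forall u, `|'d N u u - 2 * N u| >= a * psi u `^ mu - c0) ->
  (* (H3) *)
  0 < k ->
  (forall u, J u >= k * `|u| ^+ 2) ->
  (* (H4) *)
  0 < b -> 0 < d -> 2 < q ->
  (forall u, `|N u| <= b * `|i u| `^ q + d) ->
  q * t < 2 ->
  forall c : R, Chat (fun u => J u - N u) c.
Proof.
move=> _ _ [dI _] [dN _] hJ /andP[t0 t1] psi0 _ H1 a0 c00 mu0 H2 k0 H3 b0 d0 q2 H4 qt c.
rewrite /Chat => u hIc hdI.
set I := (fun u => J u - N u) in dI hIc hdI *.
have key : forall v, 'd N v v - 2 * N v = 2 * I v - 'd I v v.
  move=> v.
  have eJ : J = I + N by apply/funext => w /=; rewrite /I subrK.
  have dJv : differentiable J v by rewrite eJ; exact: differentiableD.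
  have := @hom_diff R E J v hJ dJv. rewrite {1}eJ diffD //= => h.
  rewrite /I; lra.
have ev1 := @cvgr_dist_lt _ _ _ _ _ _ _ hIc _ (@ltr01 R).
have ev2 := @cvgr_dist_lt _ _ _ _ _ _ _ hdI _ (@ltr01 R).
have [N0 _ hN0] := filterI (ev1 _) (ev2 _).
pose K := 2 * (`|c| + 1) + 1.
pose P := ((K + c0) / a) `^ mu^-1.
pose A := `|c| + 1 + d.
pose B := b * P `^ ((1 - t) * q).
pose s := t * q.
exists (fun n => (n + N0)%N), (1 + ((A + B) / k) `^ (2 - s)^-1); split.
  by move=> m n mn; rewrite ltn_add2r.
move=> n.
have [h1 h2] := hN0 (n + N0)%N (leq_addl _ _).
move: h1 h2 => /=.
set v := u (n + N0)%N.
set dn := dual_norm ('d I v).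
move=> h1 h2.
have nv0 : 0 <= `|v| by [].
have hIv : - (`|c| + 1) <= I v <= `|c| + 1.
  move: h1; rewrite ltr_norml => /andP[h1a h1b].
  have := ler_norml c `|c|; rewrite lexx => /esym/andP[hc1 hc2].
  rewrite /I; apply/andP; split; lra.
have hdv : `|'d I v v| <= dn * `|v|.
  by apply: dual_bound; apply: diff_continuous.
have hdv1 : - 1 <= 'd I v v <= 1.
  move: h2; rewrite sub0r normrN ltr_norml => /andP[h2a h2b].
  have := ler_norml ('d I v v) `|'d I v v|; rewrite lexx => /esym/andP[hd1 hd2].
  have hX : `|'d I v v| <= 1.
    have [dn0|dn0] := leP 0 dn.
      apply: (le_trans hdv); nra.
    apply: (le_trans hdv); nra.
  apply/andP; split; lra.
have hK : `|'d N v v - 2 * N v| <= K.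
  rewrite key ler_norml /K; move: hIv hdv1 => /andP[? ?] /andP[? ?].
  apply/andP; split; lra.
have hpsimu : psi v `^ mu <= (K + c0) / a.
  rewrite ler_pdivlMr // mulrC; have := H2 v; lra.
have hpsi : psi v <= P by apply: root_bound.
have P0 : 0 <= P by rewrite /P powR_ge0.
have hiv : `|i v| <= P `^ (1 - t) * `|v| `^ t.
  apply: (le_trans (H1 v)); apply: ler_wpM2r; first exact: powR_ge0.
  apply: ge0_ler_powR; [by rewrite subr_ge0 ltW | by rewrite nnegrE | by rewrite nnegrE | exact: hpsi].
have hiv' : `|i v| `^ q <= P `^ ((1 - t) * q) * `|v| `^ s.
  rewrite /s (powRrM P) (powRrM `|v|) -powRM ?powR_ge0 //.
  apply: ge0_ler_powR; [by rewrite ltW // (lt_trans _ q2) | by rewrite nnegrE | by rewrite nnegrE mulr_ge0 ?powR_ge0 | exact: hiv].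
have hN : N v <= B * `|v| `^ s + d.
  have := H4 v; have := ler_norml (N v) `|N v|; rewrite lexx => /esym/andP[? ?].
  have : b * `|i v| `^ q <= B * `|v| `^ s.
    by rewrite /B -mulrA ler_wpM2l // ltW.
  lra.
apply: growth => //.
- by rewrite /A !addr_ge0 // ltW.
- by rewrite /B mulr_ge0 ?powR_ge0 // ltW.
- rewrite /s; apply: mulr_ge0; apply: ltW => //; exact: lt_trans q2.
- by rewrite /s mulrC.
- have := H3 v; move: hIv; rewrite /I /A => /andP[? ?]; lra.
Qed.
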